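(* Let $A\in\mathbb Z^{d\times n}$ satisfy $\ker(A)\cap\mathbb N^n=\{0\}$ (not necessarily homogeneous). Then the Graver basis $G(A)$ is strongly distance reducing.
   Context: For $z\in\mathbb Z^n$, $z^\pm\in\mathbb N^n$ are the unique vectors with disjoint supports and $z=z^+-z^-$; $\|\cdot\|$ is the $1$-norm. A conformal decomposition of $z\in\ker(A)$ is $z=u+v$ with $u,v\in\ker(A)$, $z^+=u^++v^+$, $z^-=u^-+v^-$; it is proper if $u,v\ne0$. The Graver basis $G(A)$ is the set of nonzero $z\in\ker(A)$ with no proper conformal decomposition. A set $B\subseteq\ker(A)$ is strongly distance reducing if for every nonzero $z\in\ker(A)$ there exist $u\in B$ and $\varepsilon\in\{\pm1\}$ with $z^++\varepsilon u\in\mathbb N^n$ and $\|z^++\varepsilon u-z^-\|<\|z\|$, and there exist $u'\in B$ and $\varepsilon'\in\{\pm1\}$ with $z^-+\varepsilon'u'\in\mathbb N^n$ and $\|z^+-(z^-+\varepsilon'u')\|<\|z\|$. *)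

(* Defs.v *)
From mathcomp Require Import all_boot all_order all_algebra.
Set Implicit Arguments. Unset Strict Implicit. Unset Printing Implicit Defensive.
Import Order.TTheory GRing.Theory Num.Theory.
Local Open Scope ring_scope.

Definition vpos n (z : 'cV[int]_n) : 'cV[int]_n := \col_i Num.max (z i 0) 0.
Definition vneg n (z : 'cV[int]_n) : 'cV[int]_n := \col_i Num.max (- z i 0) 0.
Definition norm1 n (z : 'cV[int]_n) : int := \sum_i `|z i 0|.
Definition nonneg_vec n (z : 'cV[int]_n) : Prop := forall i, 0 <= z i 0.
Definition in_ker d n (A : 'M[int]_(d, n)) (z : 'cV[int]_n) : Prop := A *m z = 0.

Definition conformal_decomp d n (A : 'M[int]_(d, n)) (z u v : 'cV[int]_n) : Prop :=
  [/\ in_ker A u, in_ker A v, z = u + v,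
      vpos z = vpos u + vpos v & vneg z = vneg u + vneg v].

Definition graver d n (A : 'M[int]_(d, n)) (z : 'cV[int]_n) : Prop :=
  [/\ in_ker A z, z <> 0 &
      ~ (exists u v, conformal_decomp A z u v /\ u <> 0 /\ v <> 0)].

Definition strongly_distance_reducing d n (A : 'M[int]_(d, n))
    (B : 'cV[int]_n -> Prop) : Prop :=
  (forall u, B u -> in_ker A u) /\
  (forall z, in_ker A z -> z <> 0 ->
    (exists u (eps : int), [/\ B u, eps = 1 \/ eps = -1,
        nonneg_vec (vpos z + eps *: u) &
        norm1 (vpos z + eps *: u - vneg z) < norm1 z]) /\
    (exists u' (eps' : int), [/\ B u', eps' = 1 \/ eps' = -1,
        nonneg_vec (vneg z + eps' *: u') &
        norm1 (vpos z - (vneg z + eps' *: u')) < norm1 z])).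

(* Main.v *)
Require Import Defs.
From mathcomp Require Import all_boot all_order all_algebra.
From mathcomp Require Import zify.
From Stdlib Require Import Classical.
Set Implicit Arguments. Unset Strict Implicit.
Import Order.TTheory GRing.Theory Num.Theory.
Local Open Scope ring_scope.

Definition confle n (g z : 'cV[int]_n) : Prop :=
  forall i, (0 <= g i 0 <= z i 0) \/ (z i 0 <= g i 0 <= 0).

Lemma norm1_ge0 n (z : 'cV[int]_n) : 0 <= norm1 z.
Proof. by rewrite /norm1; apply: sumr_ge0 => i _. Qed.

Lemma norm1_pos n (z : 'cV[int]_n) : z <> 0 -> 0 < norm1 z.
Proof.
move=> nz; rewrite lt_def norm1_ge0 andbT; apply/eqP => h.
apply: nz; apply/matrixP => i j; rewrite ord1 mxE.
have := @psumr_eq0P _ _ predT (fun i => `|z i 0|) (fun i _ => normr_ge0 (z i 0)) h i isT.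
by move/eqP; rewrite normr_eq0 => /eqP.
Qed.

Lemma decomp_conf d n (A : 'M[int]_(d, n)) z u v :
  conformal_decomp A z u v ->
  confle u z /\ norm1 z = norm1 u + norm1 v.
Proof.
case=> _ _ Ez Ep En.
have H : forall i, ((0 <= u i 0 <= z i 0) \/ (z i 0 <= u i 0 <= 0)) /\
   `|z i 0| = `|u i 0| + `|v i 0|.
  move=> i.
  have e1 : z i 0 = u i 0 + v i 0 by rewrite Ez mxE.
  have e2 := congr1 (fun M : 'cV[int]_n => M i 0) Ep.
  have e3 := congr1 (fun M : 'cV[int]_n => M i 0) En.
  move: e2 e3; rewrite /vpos /vneg !mxE /= => e2 e3.
  lia.
split; first by move=> i; case: (H i).
rewrite /norm1 -big_split; apply: eq_bigr => i _; by case: (H i).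
Qed.

Lemma exists_graver d n (A : 'M[int]_(d, n)) (k : nat) (z : 'cV[int]_n) :
  norm1 z <= k%:Z -> in_ker A z -> z <> 0 ->
  exists g, graver A g /\ confle g z.
Proof.
elim: k z => [|k IH] z hk hz nz.
  by have := norm1_pos nz; lia.
case: (classic (exists u v, conformal_decomp A z u v /\ u <> 0 /\ v <> 0)).
  move=> [u [v [cd [nu nv]]]].
  have [cuz en] := decomp_conf cd.
  have pv := norm1_pos nv.
  case: cd => ku _ _ _ _.
  have [g [gg cgu]] := IH u ltac:(lia) ku nu.
  exists g; split => // i; have := cgu i; have := cuz i; lia.
move=> ng; exists z; split; first by split.
move=> i; lia.
Qed.

Lemma l1 (a b : int) : (0<=a<=b)\/(b<=a<=0) -> 0 <= Num.max b 0 + -1 * a.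
Proof. lia. Qed.
Lemma l2 (a b : int) : (0<=a<=b)\/(b<=a<=0) ->
  `|Num.max b 0 + -1 * a - Num.max (- b) 0| + `|a| = `|b|.
Proof. lia. Qed.
Lemma l3 (a b : int) : (0<=a<=b)\/(b<=a<=0) -> 0 <= Num.max (- b) 0 + 1 * a.
Proof. lia. Qed.
Lemma l4 (a b : int) : (0<=a<=b)\/(b<=a<=0) ->
  `|Num.max b 0 - (Num.max (- b) 0 + 1 * a)| + `|a| = `|b|.
Proof. lia. Qed.
Lemma l5 (x y z : int) : x + y = z -> 0 < y -> x < z.
Proof. lia. Qed.

Theorem proposition7p2 (d n : nat) (A : 'M[int]_(d, n))
  (hA : forall z : 'cV[int]_n, in_ker A z -> nonneg_vec z -> z = 0) :
  strongly_distance_reducing A (graver A).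
Proof.
split; first by move=> u [].
move=> z hz nz.
have [g [gg cg]] := @exists_graver d n A `|norm1 z|%N z ltac:(rewrite abszE; exact: ler_norm) hz nz.
have pg : 0 < norm1 g by apply: norm1_pos; case: gg.
split.
- exists g, (-1); split => //; [by right| |].
  + by move=> i; rewrite !mxE; apply: l1; apply: cg.
  + apply: l5 pg.
      rewrite /norm1 -big_split; apply: eq_bigr => i _.
      by rewrite !mxE; apply: l2; apply: cg.
- exists g, 1; split => //; [by left| |].
  + by move=> i; rewrite !mxE; apply: l3; apply: cg.
  + apply: l5 pg.
      rewrite /norm1 -big_split; apply: eq_bigr => i _.
      by rewrite !mxE; apply: l4; apply: cg.
Qed.
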